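(* A set $S$ of points of $PG(3,2)$ is a strong blocking set of size $9$ if and only if $S$ is a hyperbolic quadric $Q^{+}(3,2)$. That is, the minimal strong blocking sets of $PG(3,2)$ are exactly the hyperbolic quadrics $Q^{+}(3,2)$.
   Context: $PG(3,2)$ is the $3$-dimensional projective space over $\mathbb{F}_2$. A strong blocking set in $PG(3,2)$ is a set of points $S$ such that for every plane $\sigma$, the span $\langle \sigma\cap S\rangle$ equals $\sigma$; the minimum possible size of such a set is $9$, and a strong blocking set of size $9$ is called a minimal strong blocking set. A hyperbolic quadric $Q^{+}(3,2)$ is the set of points of $PG(3,2)$ which is the zero set of a non-degenerate quadratic form of hyperbolic type, i.e. a point set projectively equivalent to $\{(x_0:x_1:x_2:x_3): x_0x_1+x_2x_3=0\}$ (it has $9$ points). *)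

(* Defs.v *)
From HB Require Import structures.
From mathcomp Require Import all_boot all_order all_algebra.
Set Implicit Arguments. Unset Strict Implicit. Unset Printing Implicit Defensive.
Import GRing.Theory.
Local Open Scope ring_scope.

(* Vectors of F_2^4.  Over F_2 every 1-dim subspace has exactly one nonzero
   vector, so the points of PG(3,2) are exactly the nonzero vectors. *)
Definition vec4 := 'rV['F_2]_4.

Definition PGpoints : {set vec4} := [set x : vec4 | x != 0].

Definition is_plane (U : {vspace vec4}) : Prop := \dim U = 3%N.

Definition plane_points (U : {vspace vec4}) : {set vec4} :=
  [set x in PGpoints | x \in U].

Definition strong_blocking (S : {set vec4}) : Prop :=
  forall U : {vspace vec4}, is_plane U ->
    (<< enum (plane_points U :&: S)%SET >>)%VS = U.

Definition Qplus (x : vec4) : 'F_2 :=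
  x 0 (inord 0) * x 0 (inord 1) + x 0 (inord 2) * x 0 (inord 3).

Definition Qplus_std : {set vec4} := [set x in PGpoints | Qplus x == 0].

(* S is a hyperbolic quadric Q^+(3,2): the image of the standard one under a
   collineation of PG(3,2) (PGammaL(4,2) = PGL(4,2) = GL(4,2)). *)
Definition hyperbolic_quadric (S : {set vec4}) : Prop :=
  exists2 A : 'M['F_2]_4, A \in unitmx & S = [set x *m A | x in Qplus_std].

(* Main.v *)
Require Import Defs.
From HB Require Import structures.
From mathcomp Require Import all_boot all_order all_algebra.
From mathcomp Require Import all_field.
Set Implicit Arguments. Unset Strict Implicit. Unset Printing Implicit Defensive.

Definition b4 : Type := (bool * bool * bool * bool)%type.
Definition zero4 : b4 := (false,false,false,false).
Definition xor4 (p q : b4) : b4 :=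
  let: (p0,p1,p2,p3) := p in let: (q0,q1,q2,q3) := q in
  (addb p0 q0, addb p1 q1, addb p2 q2, addb p3 q3).
Definition allb4 : seq b4 :=
  [:: (false,false,false,false);
     (true,false,false,false);
     (false,true,false,false);
     (true,true,false,false);
     (false,false,true,false);
     (true,false,true,false);
     (false,true,true,false);
     (true,true,true,false);
     (false,false,false,true);
     (true,false,false,true);
     (false,true,false,true);
     (true,true,false,true);
     (false,false,true,true);
     (true,false,true,true);
     (false,true,true,true);
     (true,true,true,true)].
Fixpoint sumsb (s : seq b4) : seq b4 :=
  if s is y :: s' then sumsb s' ++ [seq xor4 z y | z <- sumsb s'] else [:: zero4].
Definition goodTb (m : b4 -> bool) (a b c : b4) : bool :=
  all (fun x => x \in sumsb (filter m (sumsb [:: a; b; c]))) [:: a; b; c].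
Definition Qb (p : b4) : bool := let: (b0,b1,b2,b3) := p in addb (b0 && b1) (b2 && b3).
Definition mQ (p : b4) : bool := (p != zero4) && ~~ Qb p.
Definition entries : seq ((b4 * b4 * b4) * (b4 * b4) * seq b4) :=
  [:: (((false,true,false,false),(false,false,true,false),(false,false,false,true)),((false,true,false,false),(false,false,true,false)),[:: (false,false,false,true); (false,true,false,true); (false,false,true,true); (false,true,true,true)]);
     (((false,true,false,false),(false,false,true,false),(false,false,false,true)),((false,true,false,false),(false,false,false,true)),[:: (false,false,true,false); (false,true,true,false); (false,false,true,true); (false,true,true,true)]);
     (((false,true,false,false),(false,false,true,false),(false,false,false,true)),((false,true,false,false),(false,false,true,true)),[:: (false,false,true,false); (false,true,true,false); (false,false,false,true); (false,true,false,true)]);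
     (((false,true,false,false),(false,false,true,false),(false,false,false,true)),((false,false,true,false),(false,false,false,true)),[:: (false,true,false,false); (false,true,true,false); (false,true,false,true); (false,true,true,true)]);
     (((false,true,false,false),(false,false,true,false),(false,false,false,true)),((false,false,true,false),(false,true,false,true)),[:: (false,true,false,false); (false,true,true,false); (false,false,false,true); (false,false,true,true)]);
     (((false,true,false,false),(false,false,true,false),(false,false,false,true)),((false,true,true,false),(false,false,false,true)),[:: (false,true,false,false); (false,false,true,false); (false,true,false,true); (false,false,true,true)]);
     (((false,true,false,false),(false,false,true,false),(false,false,false,true)),((false,true,true,false),(false,true,false,true)),[:: (false,true,false,false); (false,false,true,false); (false,false,false,true); (false,true,true,true)]);
     (((true,false,false,false),(false,false,true,false),(false,false,false,true)),((true,false,false,false),(false,false,true,false)),[:: (false,false,false,true); (true,false,false,true); (false,false,true,true); (true,false,true,true)]);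
     (((true,false,false,false),(false,false,true,false),(false,false,false,true)),((true,false,false,false),(false,false,false,true)),[:: (false,false,true,false); (true,false,true,false); (false,false,true,true); (true,false,true,true)]);
     (((true,false,false,false),(false,false,true,false),(false,false,false,true)),((true,false,false,false),(false,false,true,true)),[:: (false,false,true,false); (true,false,true,false); (false,false,false,true); (true,false,false,true)]);
     (((true,false,false,false),(false,false,true,false),(false,false,false,true)),((false,false,true,false),(false,false,false,true)),[:: (true,false,false,false); (true,false,true,false); (true,false,false,true); (true,false,true,true)]);
     (((true,false,false,false),(false,false,true,false),(false,false,false,true)),((false,false,true,false),(true,false,false,true)),[:: (true,false,false,false); (true,false,true,false); (false,false,false,true); (false,false,true,true)]);
     (((true,false,false,false),(false,false,true,false),(false,false,false,true)),((true,false,true,false),(false,false,false,true)),[:: (true,false,false,false); (false,false,true,false); (true,false,false,true); (false,false,true,true)]);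
     (((true,false,false,false),(false,false,true,false),(false,false,false,true)),((true,false,true,false),(true,false,false,true)),[:: (true,false,false,false); (false,false,true,false); (false,false,false,true); (true,false,true,true)]);
     (((true,true,false,false),(false,false,true,false),(false,false,false,true)),((true,true,false,false),(false,false,true,false)),[:: (false,false,false,true); (true,true,false,true); (false,false,true,true); (true,true,true,true)]);
     (((true,true,false,false),(false,false,true,false),(false,false,false,true)),((true,true,false,false),(false,false,false,true)),[:: (false,false,true,false); (true,true,true,false); (false,false,true,true); (true,true,true,true)]);
     (((true,true,false,false),(false,false,true,false),(false,false,false,true)),((true,true,false,false),(false,false,true,true)),[:: (false,false,true,false); (true,true,true,false); (false,false,false,true); (true,true,false,true)]);
     (((true,true,false,false),(false,false,true,false),(false,false,false,true)),((false,false,true,false),(false,false,false,true)),[:: (true,true,false,false); (true,true,true,false); (true,true,false,true); (true,true,true,true)]);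
     (((true,true,false,false),(false,false,true,false),(false,false,false,true)),((false,false,true,false),(true,true,false,true)),[:: (true,true,false,false); (true,true,true,false); (false,false,false,true); (false,false,true,true)]);
     (((true,true,false,false),(false,false,true,false),(false,false,false,true)),((true,true,true,false),(false,false,false,true)),[:: (true,true,false,false); (false,false,true,false); (true,true,false,true); (false,false,true,true)]);
     (((true,true,false,false),(false,false,true,false),(false,false,false,true)),((true,true,true,false),(true,true,false,true)),[:: (true,true,false,false); (false,false,true,false); (false,false,false,true); (true,true,true,true)]);
     (((true,false,false,false),(false,true,false,false),(false,false,false,true)),((true,false,false,false),(false,true,false,false)),[:: (false,false,false,true); (true,false,false,true); (false,true,false,true); (true,true,false,true)]);
     (((true,false,false,false),(false,true,false,false),(false,false,false,true)),((true,false,false,false),(false,false,false,true)),[:: (false,true,false,false); (true,true,false,false); (false,true,false,true); (true,true,false,true)]);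
     (((true,false,false,false),(false,true,false,false),(false,false,false,true)),((true,false,false,false),(false,true,false,true)),[:: (false,true,false,false); (true,true,false,false); (false,false,false,true); (true,false,false,true)]);
     (((true,false,false,false),(false,true,false,false),(false,false,false,true)),((false,true,false,false),(false,false,false,true)),[:: (true,false,false,false); (true,true,false,false); (true,false,false,true); (true,true,false,true)]);
     (((true,false,false,false),(false,true,false,false),(false,false,false,true)),((false,true,false,false),(true,false,false,true)),[:: (true,false,false,false); (true,true,false,false); (false,false,false,true); (false,true,false,true)]);
     (((true,false,false,false),(false,true,false,false),(false,false,false,true)),((true,true,false,false),(false,false,false,true)),[:: (true,false,false,false); (false,true,false,false); (true,false,false,true); (false,true,false,true)]);
     (((true,false,false,false),(false,true,false,false),(false,false,false,true)),((true,true,false,false),(true,false,false,true)),[:: (true,false,false,false); (false,true,false,false); (false,false,false,true); (true,true,false,true)]);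
     (((false,true,false,false),(true,false,true,false),(false,false,false,true)),((false,true,false,false),(true,false,true,false)),[:: (false,false,false,true); (false,true,false,true); (true,false,true,true); (true,true,true,true)]);
     (((false,true,false,false),(true,false,true,false),(false,false,false,true)),((false,true,false,false),(false,false,false,true)),[:: (true,false,true,false); (true,true,true,false); (true,false,true,true); (true,true,true,true)]);
     (((false,true,false,false),(true,false,true,false),(false,false,false,true)),((false,true,false,false),(true,false,true,true)),[:: (true,false,true,false); (true,true,true,false); (false,false,false,true); (false,true,false,true)]);
     (((false,true,false,false),(true,false,true,false),(false,false,false,true)),((true,false,true,false),(false,false,false,true)),[:: (false,true,false,false); (true,true,true,false); (false,true,false,true); (true,true,true,true)]);
     (((false,true,false,false),(true,false,true,false),(false,false,false,true)),((true,false,true,false),(false,true,false,true)),[:: (false,true,false,false); (true,true,true,false); (false,false,false,true); (true,false,true,true)]);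
     (((false,true,false,false),(true,false,true,false),(false,false,false,true)),((true,true,true,false),(false,false,false,true)),[:: (false,true,false,false); (true,false,true,false); (false,true,false,true); (true,false,true,true)]);
     (((false,true,false,false),(true,false,true,false),(false,false,false,true)),((true,true,true,false),(false,true,false,true)),[:: (false,true,false,false); (true,false,true,false); (false,false,false,true); (true,true,true,true)]);
     (((true,false,false,false),(false,true,true,false),(false,false,false,true)),((true,false,false,false),(false,true,true,false)),[:: (false,false,false,true); (true,false,false,true); (false,true,true,true); (true,true,true,true)]);
     (((true,false,false,false),(false,true,true,false),(false,false,false,true)),((true,false,false,false),(false,false,false,true)),[:: (false,true,true,false); (true,true,true,false); (false,true,true,true); (true,true,true,true)]);
     (((true,false,false,false),(false,true,true,false),(false,false,false,true)),((true,false,false,false),(false,true,true,true)),[:: (false,true,true,false); (true,true,true,false); (false,false,false,true); (true,false,false,true)]);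
     (((true,false,false,false),(false,true,true,false),(false,false,false,true)),((false,true,true,false),(false,false,false,true)),[:: (true,false,false,false); (true,true,true,false); (true,false,false,true); (true,true,true,true)]);
     (((true,false,false,false),(false,true,true,false),(false,false,false,true)),((false,true,true,false),(true,false,false,true)),[:: (true,false,false,false); (true,true,true,false); (false,false,false,true); (false,true,true,true)]);
     (((true,false,false,false),(false,true,true,false),(false,false,false,true)),((true,true,true,false),(false,false,false,true)),[:: (true,false,false,false); (false,true,true,false); (true,false,false,true); (false,true,true,true)]);
     (((true,false,false,false),(false,true,true,false),(false,false,false,true)),((true,true,true,false),(true,false,false,true)),[:: (true,false,false,false); (false,true,true,false); (false,false,false,true); (true,true,true,true)]);
     (((true,true,false,false),(true,false,true,false),(false,false,false,true)),((true,true,false,false),(true,false,true,false)),[:: (false,false,false,true); (true,true,false,true); (true,false,true,true); (false,true,true,true)]);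
     (((true,true,false,false),(true,false,true,false),(false,false,false,true)),((true,true,false,false),(false,false,false,true)),[:: (true,false,true,false); (false,true,true,false); (true,false,true,true); (false,true,true,true)]);
     (((true,true,false,false),(true,false,true,false),(false,false,false,true)),((true,true,false,false),(true,false,true,true)),[:: (true,false,true,false); (false,true,true,false); (false,false,false,true); (true,true,false,true)]);
     (((true,true,false,false),(true,false,true,false),(false,false,false,true)),((true,false,true,false),(false,false,false,true)),[:: (true,true,false,false); (false,true,true,false); (true,true,false,true); (false,true,true,true)]);
     (((true,true,false,false),(true,false,true,false),(false,false,false,true)),((true,false,true,false),(true,true,false,true)),[:: (true,true,false,false); (false,true,true,false); (false,false,false,true); (true,false,true,true)]);
     (((true,true,false,false),(true,false,true,false),(false,false,false,true)),((false,true,true,false),(false,false,false,true)),[:: (true,true,false,false); (true,false,true,false); (true,true,false,true); (true,false,true,true)]);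
     (((true,true,false,false),(true,false,true,false),(false,false,false,true)),((false,true,true,false),(true,true,false,true)),[:: (true,true,false,false); (true,false,true,false); (false,false,false,true); (false,true,true,true)]);
     (((true,false,false,false),(false,true,false,false),(false,false,true,false)),((true,false,false,false),(false,true,false,false)),[:: (false,false,true,false); (true,false,true,false); (false,true,true,false); (true,true,true,false)]);
     (((true,false,false,false),(false,true,false,false),(false,false,true,false)),((true,false,false,false),(false,false,true,false)),[:: (false,true,false,false); (true,true,false,false); (false,true,true,false); (true,true,true,false)]);
     (((true,false,false,false),(false,true,false,false),(false,false,true,false)),((true,false,false,false),(false,true,true,false)),[:: (false,true,false,false); (true,true,false,false); (false,false,true,false); (true,false,true,false)]);
     (((true,false,false,false),(false,true,false,false),(false,false,true,false)),((false,true,false,false),(false,false,true,false)),[:: (true,false,false,false); (true,true,false,false); (true,false,true,false); (true,true,true,false)]);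
     (((true,false,false,false),(false,true,false,false),(false,false,true,false)),((false,true,false,false),(true,false,true,false)),[:: (true,false,false,false); (true,true,false,false); (false,false,true,false); (false,true,true,false)]);
     (((true,false,false,false),(false,true,false,false),(false,false,true,false)),((true,true,false,false),(false,false,true,false)),[:: (true,false,false,false); (false,true,false,false); (true,false,true,false); (false,true,true,false)]);
     (((true,false,false,false),(false,true,false,false),(false,false,true,false)),((true,true,false,false),(true,false,true,false)),[:: (true,false,false,false); (false,true,false,false); (false,false,true,false); (true,true,true,false)]);
     (((false,true,false,false),(false,false,true,false),(true,false,false,true)),((false,true,false,false),(false,false,true,false)),[:: (true,false,false,true); (true,true,false,true); (true,false,true,true); (true,true,true,true)]);
     (((false,true,false,false),(false,false,true,false),(true,false,false,true)),((false,true,false,false),(true,false,false,true)),[:: (false,false,true,false); (false,true,true,false); (true,false,true,true); (true,true,true,true)]);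
     (((false,true,false,false),(false,false,true,false),(true,false,false,true)),((false,true,false,false),(true,false,true,true)),[:: (false,false,true,false); (false,true,true,false); (true,false,false,true); (true,true,false,true)]);
     (((false,true,false,false),(false,false,true,false),(true,false,false,true)),((false,false,true,false),(true,false,false,true)),[:: (false,true,false,false); (false,true,true,false); (true,true,false,true); (true,true,true,true)]);
     (((false,true,false,false),(false,false,true,false),(true,false,false,true)),((false,false,true,false),(true,true,false,true)),[:: (false,true,false,false); (false,true,true,false); (true,false,false,true); (true,false,true,true)]);
     (((false,true,false,false),(false,false,true,false),(true,false,false,true)),((false,true,true,false),(true,false,false,true)),[:: (false,true,false,false); (false,false,true,false); (true,true,false,true); (true,false,true,true)]);
     (((false,true,false,false),(false,false,true,false),(true,false,false,true)),((false,true,true,false),(true,true,false,true)),[:: (false,true,false,false); (false,false,true,false); (true,false,false,true); (true,true,true,true)]);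
     (((true,false,false,false),(false,false,true,false),(false,true,false,true)),((true,false,false,false),(false,false,true,false)),[:: (false,true,false,true); (true,true,false,true); (false,true,true,true); (true,true,true,true)]);
     (((true,false,false,false),(false,false,true,false),(false,true,false,true)),((true,false,false,false),(false,true,false,true)),[:: (false,false,true,false); (true,false,true,false); (false,true,true,true); (true,true,true,true)]);
     (((true,false,false,false),(false,false,true,false),(false,true,false,true)),((true,false,false,false),(false,true,true,true)),[:: (false,false,true,false); (true,false,true,false); (false,true,false,true); (true,true,false,true)]);
     (((true,false,false,false),(false,false,true,false),(false,true,false,true)),((false,false,true,false),(false,true,false,true)),[:: (true,false,false,false); (true,false,true,false); (true,true,false,true); (true,true,true,true)]);
     (((true,false,false,false),(false,false,true,false),(false,true,false,true)),((false,false,true,false),(true,true,false,true)),[:: (true,false,false,false); (true,false,true,false); (false,true,false,true); (false,true,true,true)]);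
     (((true,false,false,false),(false,false,true,false),(false,true,false,true)),((true,false,true,false),(false,true,false,true)),[:: (true,false,false,false); (false,false,true,false); (true,true,false,true); (false,true,true,true)]);
     (((true,false,false,false),(false,false,true,false),(false,true,false,true)),((true,false,true,false),(true,true,false,true)),[:: (true,false,false,false); (false,false,true,false); (false,true,false,true); (true,true,true,true)]);
     (((true,true,false,false),(false,false,true,false),(true,false,false,true)),((true,true,false,false),(false,false,true,false)),[:: (true,false,false,true); (false,true,false,true); (true,false,true,true); (false,true,true,true)]);
     (((true,true,false,false),(false,false,true,false),(true,false,false,true)),((true,true,false,false),(true,false,false,true)),[:: (false,false,true,false); (true,true,true,false); (true,false,true,true); (false,true,true,true)]);
     (((true,true,false,false),(false,false,true,false),(true,false,false,true)),((true,true,false,false),(true,false,true,true)),[:: (false,false,true,false); (true,true,true,false); (true,false,false,true); (false,true,false,true)]);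
     (((true,true,false,false),(false,false,true,false),(true,false,false,true)),((false,false,true,false),(true,false,false,true)),[:: (true,true,false,false); (true,true,true,false); (false,true,false,true); (false,true,true,true)]);
     (((true,true,false,false),(false,false,true,false),(true,false,false,true)),((false,false,true,false),(false,true,false,true)),[:: (true,true,false,false); (true,true,true,false); (true,false,false,true); (true,false,true,true)]);
     (((true,true,false,false),(false,false,true,false),(true,false,false,true)),((true,true,true,false),(true,false,false,true)),[:: (true,true,false,false); (false,false,true,false); (false,true,false,true); (true,false,true,true)]);
     (((true,true,false,false),(false,false,true,false),(true,false,false,true)),((true,true,true,false),(false,true,false,true)),[:: (true,true,false,false); (false,false,true,false); (true,false,false,true); (false,true,true,true)]);
     (((true,false,false,false),(false,true,false,false),(false,false,true,true)),((true,false,false,false),(false,true,false,false)),[:: (false,false,true,true); (true,false,true,true); (false,true,true,true); (true,true,true,true)]);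
     (((true,false,false,false),(false,true,false,false),(false,false,true,true)),((true,false,false,false),(false,false,true,true)),[:: (false,true,false,false); (true,true,false,false); (false,true,true,true); (true,true,true,true)]);
     (((true,false,false,false),(false,true,false,false),(false,false,true,true)),((true,false,false,false),(false,true,true,true)),[:: (false,true,false,false); (true,true,false,false); (false,false,true,true); (true,false,true,true)]);
     (((true,false,false,false),(false,true,false,false),(false,false,true,true)),((false,true,false,false),(false,false,true,true)),[:: (true,false,false,false); (true,true,false,false); (true,false,true,true); (true,true,true,true)]);
     (((true,false,false,false),(false,true,false,false),(false,false,true,true)),((false,true,false,false),(true,false,true,true)),[:: (true,false,false,false); (true,true,false,false); (false,false,true,true); (false,true,true,true)]);
     (((true,false,false,false),(false,true,false,false),(false,false,true,true)),((true,true,false,false),(false,false,true,true)),[:: (true,false,false,false); (false,true,false,false); (true,false,true,true); (false,true,true,true)]);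
     (((true,false,false,false),(false,true,false,false),(false,false,true,true)),((true,true,false,false),(true,false,true,true)),[:: (true,false,false,false); (false,true,false,false); (false,false,true,true); (true,true,true,true)]);
     (((false,true,false,false),(true,false,true,false),(true,false,false,true)),((false,true,false,false),(true,false,true,false)),[:: (true,false,false,true); (true,true,false,true); (false,false,true,true); (false,true,true,true)]);
     (((false,true,false,false),(true,false,true,false),(true,false,false,true)),((false,true,false,false),(true,false,false,true)),[:: (true,false,true,false); (true,true,true,false); (false,false,true,true); (false,true,true,true)]);
     (((false,true,false,false),(true,false,true,false),(true,false,false,true)),((false,true,false,false),(false,false,true,true)),[:: (true,false,true,false); (true,true,true,false); (true,false,false,true); (true,true,false,true)]);
     (((false,true,false,false),(true,false,true,false),(true,false,false,true)),((true,false,true,false),(true,false,false,true)),[:: (false,true,false,false); (true,true,true,false); (true,true,false,true); (false,true,true,true)]);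
     (((false,true,false,false),(true,false,true,false),(true,false,false,true)),((true,false,true,false),(true,true,false,true)),[:: (false,true,false,false); (true,true,true,false); (true,false,false,true); (false,false,true,true)]);
     (((false,true,false,false),(true,false,true,false),(true,false,false,true)),((true,true,true,false),(true,false,false,true)),[:: (false,true,false,false); (true,false,true,false); (true,true,false,true); (false,false,true,true)]);
     (((false,true,false,false),(true,false,true,false),(true,false,false,true)),((true,true,true,false),(true,true,false,true)),[:: (false,true,false,false); (true,false,true,false); (true,false,false,true); (false,true,true,true)]);
     (((true,false,false,false),(false,true,true,false),(false,true,false,true)),((true,false,false,false),(false,true,true,false)),[:: (false,true,false,true); (true,true,false,true); (false,false,true,true); (true,false,true,true)]);
     (((true,false,false,false),(false,true,true,false),(false,true,false,true)),((true,false,false,false),(false,true,false,true)),[:: (false,true,true,false); (true,true,true,false); (false,false,true,true); (true,false,true,true)]);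
     (((true,false,false,false),(false,true,true,false),(false,true,false,true)),((true,false,false,false),(false,false,true,true)),[:: (false,true,true,false); (true,true,true,false); (false,true,false,true); (true,true,false,true)]);
     (((true,false,false,false),(false,true,true,false),(false,true,false,true)),((false,true,true,false),(false,true,false,true)),[:: (true,false,false,false); (true,true,true,false); (true,true,false,true); (true,false,true,true)]);
     (((true,false,false,false),(false,true,true,false),(false,true,false,true)),((false,true,true,false),(true,true,false,true)),[:: (true,false,false,false); (true,true,true,false); (false,true,false,true); (false,false,true,true)]);
     (((true,false,false,false),(false,true,true,false),(false,true,false,true)),((true,true,true,false),(false,true,false,true)),[:: (true,false,false,false); (false,true,true,false); (true,true,false,true); (false,false,true,true)]);
     (((true,false,false,false),(false,true,true,false),(false,true,false,true)),((true,true,true,false),(true,true,false,true)),[:: (true,false,false,false); (false,true,true,false); (false,true,false,true); (true,false,true,true)]);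
     (((true,true,false,false),(true,false,true,false),(true,false,false,true)),((true,true,false,false),(true,false,true,false)),[:: (true,false,false,true); (false,true,false,true); (false,false,true,true); (true,true,true,true)]);
     (((true,true,false,false),(true,false,true,false),(true,false,false,true)),((true,true,false,false),(true,false,false,true)),[:: (true,false,true,false); (false,true,true,false); (false,false,true,true); (true,true,true,true)]);
     (((true,true,false,false),(true,false,true,false),(true,false,false,true)),((true,true,false,false),(false,false,true,true)),[:: (true,false,true,false); (false,true,true,false); (true,false,false,true); (false,true,false,true)]);
     (((true,true,false,false),(true,false,true,false),(true,false,false,true)),((true,false,true,false),(true,false,false,true)),[:: (true,true,false,false); (false,true,true,false); (false,true,false,true); (true,true,true,true)]);
     (((true,true,false,false),(true,false,true,false),(true,false,false,true)),((true,false,true,false),(false,true,false,true)),[:: (true,true,false,false); (false,true,true,false); (true,false,false,true); (false,false,true,true)]);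
     (((true,true,false,false),(true,false,true,false),(true,false,false,true)),((false,true,true,false),(true,false,false,true)),[:: (true,true,false,false); (true,false,true,false); (false,true,false,true); (false,false,true,true)]);
     (((true,true,false,false),(true,false,true,false),(true,false,false,true)),((false,true,true,false),(false,true,false,true)),[:: (true,true,false,false); (true,false,true,false); (true,false,false,true); (true,true,true,true)])].
Definition idx (p : b4) : nat := let: (b0,b1,b2,b3) := p in (b0 + 2 * b1 + 4 * b2 + 8 * b3)%N.
Definition m_of (l : seq bool) (p : b4) : bool := nth false l (idx p).
Definition sel (b : bool) (a : b4) : b4 := if b then a else zero4.
Definition combo (a b c d p : b4) : b4 :=
  let: (p0,p1,p2,p3) := p in xor4 (xor4 (sel p0 a) (sel p1 b)) (xor4 (sel p2 c) (sel p3 d)).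
Fixpoint hasf (T : Type) (a : T -> bool) (s : seq T) : bool :=
  if s is x :: s' then (if a x then true else hasf a s') else false.
Fixpoint allf (T : Type) (a : T -> bool) (s : seq T) : bool :=
  if s is x :: s' then (if a x then allf a s' else false) else true.
Definition fullOK (m : b4 -> bool) (a b c d : b4) : bool :=
  if allf (fun p => if combo a b c d p == zero4 then p == zero4 else true) allb4 then
  allf (fun p => m (combo a b c d p) == mQ p) allb4 else false.
Definition QW (l : seq bool) : bool :=
  let m := m_of l in let Sl := filter m allb4 in
  hasf (fun a => hasf (fun c => if m (xor4 a c) then hasf (fun d =>
     if m (xor4 a d) then if m (xor4 c d) then false else
    hasf (fun b => if m (xor4 b c) then if m (xor4 b d) then if m (xor4 a b) then false else
       fullOK m a b c d else false else false) Sl else false) Sl else false) Sl) Sl.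
Fixpoint chooseL (n k : nat) : seq (seq bool) :=
  match n with
  | 0 => if k is 0 then [:: [::]] else [::]
  | n'.+1 => [seq false :: l | l <- chooseL n' k] ++
             (if k is k'.+1 then [seq true :: l | l <- chooseL n' k'] else [::])
  end.
Definition check (l : seq bool) : bool :=
  if allf (fun e => hasf (m_of (false :: l)) e.2) entries then QW (false :: l) else true.
Definition entry_ok (e : (b4 * b4 * b4) * (b4 * b4) * seq b4) : bool :=
  let T := sumsb [:: e.1.1.1.1; e.1.1.1.2; e.1.1.2] in
  uniq T && all (fun y => (y \in [:: zero4; e.1.2.1; e.1.2.2; xor4 e.1.2.1 e.1.2.2]) || (y \in e.2)) T.

Import GRing.Theory.
Local Open Scope ring_scope.

Lemma F2_cases (k : 'F_2) : k = 0 \/ k = 1.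
Proof. by case: k => [[|[|//]] Hk]; [left|right]; apply/val_inj. Qed.
Lemma F2_11 : (1 + 1 : 'F_2) = 0. Proof. by apply/val_inj. Qed.

Definition bit (p : b4) (j : nat) : bool :=
  let: (b0,b1,b2,b3) := p in nth false [:: b0; b1; b2; b3] j.
Definition dec (p : b4) : vec4 := \row_(j < 4) (nat_of_bool (bit p j))%:R.
Definition enc (x : vec4) : b4 :=
  (x 0 (inord 0) != 0, x 0 (inord 1) != 0, x 0 (inord 2) != 0, x 0 (inord 3) != 0).

Lemma ord4_cases (j : 'I_4) : j = inord 0 \/ j = inord 1 \/ j = inord 2 \/ j = inord 3.
Proof.
case: j => [[|[|[|[|//]]]] Hj]; [left|right;left|right;right;left|right;right;right];
  by apply/val_inj; rewrite /= inordK.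
Qed.

Lemma F2_nat (k : 'F_2) : (nat_of_bool (k != 0))%:R = k.
Proof. by case: (F2_cases k) => ->. Qed.

Lemma decK : cancel enc dec.
Proof.
move=> x; apply/rowP => j; rewrite mxE.
by case: (ord4_cases j) => [|[|[|]]] ->; rewrite inordK //= F2_nat.
Qed.

Lemma encK : cancel dec enc.
Proof.
case=> [[[b0 b1] b2] b3]; rewrite /enc /dec !mxE !inordK //=.
by case: b0; case: b1; case: b2; case: b3.
Qed.

Lemma dec_inj : injective dec. Proof. exact: can_inj encK. Qed.

Lemma addb_F2 (b c : bool) :
  (nat_of_bool (addb b c))%:R = (nat_of_bool b)%:R + (nat_of_bool c)%:R :> 'F_2.
Proof. by case: b; case: c; rewrite /= ?F2_11 ?addr0 ?add0r. Qed.

Lemma dec_xor p q : dec (xor4 p q) = dec p + dec q.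
Proof.
apply/rowP => j; rewrite !mxE.
case: p => [[[p0 p1] p2] p3]; case: q => [[[q0 q1] q2] q3].
by case: (ord4_cases j) => [|[|[|]]] ->; rewrite inordK //= addb_F2.
Qed.

Lemma dec0 : dec zero4 = 0.
Proof. by apply/rowP => j; rewrite !mxE; case: (ord4_cases j) => [|[|[|]]] ->; rewrite inordK. Qed.

Lemma dec_eq0 p : (dec p == 0) = (p == zero4).
Proof. by rewrite -dec0 (inj_eq dec_inj). Qed.

Lemma mem_allb4 p : p \in allb4.
Proof. by case: p => [[[[] []] []] []]. Qed.

Lemma uniq_allb4 : uniq allb4. Proof. by []. Qed.

Lemma dec_Q p : (dec p \in Qplus_std) = mQ p.
Proof.
rewrite !inE dec_eq0 /mQ; congr (_ && _).
rewrite /Qplus /dec !mxE !inordK //.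
by case: p => [[[[] []] []] []]; rewrite /= ?F2_11 ?mulr0 ?mul0r ?mulr1 ?addr0 ?add0r.
Qed.

Fixpoint sums (s : seq vec4) : seq vec4 :=
  if s is y :: s' then sums s' ++ [seq z + y | z <- sums s'] else [:: 0].

Lemma sums_mul (M : 'M['F_2]_4) s :
  sums [seq x *m M | x <- s] = [seq x *m M | x <- sums s].
Proof.
elim: s => [|y s IH] /=; first by rewrite mul0mx.
by rewrite IH map_cat -!map_comp; congr (_ ++ _); apply: eq_map => z /=; rewrite mulmxDl.
Qed.

Lemma map_dec_sumsb s : [seq dec x | x <- sumsb s] = sums [seq dec x | x <- s].
Proof.
elim: s => [|y s IH] /=; first by rewrite dec0.
by rewrite map_cat -IH -!map_comp; congr (_ ++ _); apply: eq_map => z /=; rewrite dec_xor.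
Qed.

Lemma mem_span_sums (s : seq vec4) x : (x \in <<s>>%VS) = (x \in sums s).
Proof.
elim: s x => [|y s IH] x /=; first by rewrite span_nil memv0 inE.
rewrite span_cons mem_cat; apply/memv_addP/orP.
  move=> [u /vlineP [k ->] [v Hv ->]].
  case: (F2_cases k) => ->; first by left; rewrite scale0r add0r -IH.
  by right; rewrite scale1r; apply/mapP; exists v; rewrite -?IH // addrC.
move=> [H|/mapP [z Hz ->]].
  by exists 0; rewrite ?mem0v //; exists x; rewrite ?IH ?add0r.
by exists y; rewrite ?memv_line //; exists z; rewrite ?IH // addrC.
Qed.

Lemma card_v (V : {vspace vec4}) : #|V| = (2 ^ \dim V)%N.
Proof. by rewrite card_vspace card_Fp. Qed.

Lemma dim3_uniq a b c : (\dim <<[:: a; b; c]>>%VS == 3%N) = uniq (sums [:: a; b; c]).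
Proof.
have Hc : #|<<[:: a; b; c]>>%VS| = #|sums [:: a; b; c]|.
  by apply: eq_card => x; rewrite mem_span_sums.
have Hsz : size (sums [:: a; b; c]) = 8%N by rewrite /= ?size_cat ?size_map.
have Hd := dim_span [:: a; b; c].
apply/eqP/card_uniqP.
  by move=> Hd3; rewrite Hsz -Hc card_v Hd3.
rewrite Hsz -Hc card_v => H8.
move: Hd; rewrite /=; case: (\dim _) H8 => [|[|[|[|]]]] //.
Qed.

Definition goodT (S : {set vec4}) a b c : Prop :=
  forall x, (x \in sums [seq y <- sums [:: a; b; c] | y \in S]) = (x \in sums [:: a; b; c]).

Lemma plane_enum (S : {set vec4}) a b c : S \subset PGpoints ->
  enum (plane_points <<[:: a; b; c]>>%VS :&: S) =i [seq y <- sums [:: a; b; c] | y \in S].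
Proof.
move=> HS x; rewrite mem_enum mem_filter -mem_span_sums !inE.
case Hx: (x \in S); rewrite ?andbF ?andbT //.
by have := subsetP HS x Hx; rewrite inE => ->.
Qed.

Lemma SB_iff (S : {set vec4}) : S \subset PGpoints ->
  strong_blocking S <-> (forall a b c, uniq (sums [:: a; b; c]) -> goodT S a b c).
Proof.
move=> HS; split.
  move=> HSB a b c Hu x.
  have Hd : is_plane <<[:: a; b; c]>>%VS by apply/eqP; rewrite dim3_uniq.
  have E := HSB _ Hd.
  by rewrite -!mem_span_sums -(eq_span (plane_enum a b c HS)) E.
move=> H U HU.
have [s Hs Hsz] : exists2 s : seq vec4, <<s>>%VS = U & size s = 3%N.
  by exists (vbasis U); [exact: span_basis (vbasisP U) | rewrite size_tuple].
move: Hs Hsz; case: s => [|a [|b [|c [|]]]] //= Hs _; subst U.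
have Hu : uniq (sums [:: a; b; c]) by rewrite -dim3_uniq; apply/eqP.
apply/vspaceP => x.
by rewrite (eq_span (plane_enum a b c HS)) !mem_span_sums H.
Qed.

Lemma big_check : all check (chooseL 15 9).
Proof. vm_compute. reflexivity. Qed.
Lemma entries_ok : all entry_ok entries.
Proof. vm_compute. reflexivity. Qed.
Lemma Q_check : all (fun a => all (fun b => all (fun c =>
   uniq (sumsb [:: a; b; c]) ==> goodTb mQ a b c) allb4) allb4) allb4.
Proof. vm_compute. reflexivity. Qed.

Lemma hasfE (T : Type) (a : T -> bool) s : hasf a s = has a s.
Proof. by elim: s => //= x s ->; case: (a x). Qed.
Lemma allfE (T : Type) (a : T -> bool) s : allf a s = all a s.
Proof. by elim: s => //= x s ->; case: (a x). Qed.

Definition mS (S : {set vec4}) (p : b4) : bool := dec p \in S.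

Lemma mem_map_dec (L : seq b4) x : (x \in map dec L) = (enc x \in L).
Proof. by rewrite -{1}(decK x) (mem_map dec_inj). Qed.

Lemma filter_dec (S : {set vec4}) L :
  [seq y <- map dec L | y \in S] = map dec (filter (mS S) L).
Proof. by rewrite filter_map. Qed.

Lemma goodTb_ext m1 m2 a b c : m1 =1 m2 -> goodTb m1 a b c = goodTb m2 a b c.
Proof. by move=> H; rewrite /goodTb (eq_filter H). Qed.

Lemma goodTb_goodT (S : {set vec4}) a b c :
  goodTb (mS S) a b c -> goodT S (dec a) (dec b) (dec c).
Proof.
move=> /allP H.
set Y := [seq y <- sums [:: dec a; dec b; dec c] | y \in S].
have HY : sums Y = map dec (sumsb (filter (mS S) (sumsb [:: a; b; c]))).
  rewrite /Y (_ : [:: dec a; dec b; dec c] = map dec [:: a; b; c]) //.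
  by rewrite -map_dec_sumsb filter_dec map_dec_sumsb.
have Hin : forall p, p \in [:: a; b; c] -> dec p \in <<Y>>%VS.
  by move=> p Hp; rewrite mem_span_sums HY (mem_map dec_inj); apply: H.
suff E : <<Y>>%VS = <<[:: dec a; dec b; dec c]>>%VS.
  by move=> x; rewrite -!mem_span_sums E.
apply/eqP; rewrite eqEsubv; apply/andP; split; apply/span_subvP => y.
  by rewrite mem_filter => /andP [_ Hy]; rewrite mem_span_sums.
by rewrite !inE => /or3P [] /eqP ->; apply: Hin; rewrite !inE eqxx ?orbT.
Qed.

Lemma SB_Q a b c : uniq (sums [:: a; b; c]) -> goodT Qplus_std a b c.
Proof.
move=> Hu; rewrite -(decK a) -(decK b) -(decK c); apply: goodTb_goodT.
have Hu' : uniq (sumsb [:: enc a; enc b; enc c]).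
  by rewrite -(map_inj_uniq dec_inj) map_dec_sumsb /= !decK.
move: Q_check => /allP/(_ (enc a) (mem_allb4 _))/allP/(_ (enc b) (mem_allb4 _)).
move=> /allP/(_ (enc c) (mem_allb4 _)); rewrite Hu' /= => HQ.
by rewrite (goodTb_ext _ _ _ dec_Q).
Qed.

Lemma SB_img (A : 'M['F_2]_4) (Q : {set vec4}) : A \in unitmx ->
  (forall a b c, uniq (sums [:: a; b; c]) -> goodT Q a b c) ->
  forall a b c, uniq (sums [:: a; b; c]) -> goodT [set x *m A | x in Q] a b c.
Proof.
move=> HA HQ a b c Hu x.
have fg : forall y : vec4, (y *m invmx A) *m A = y by move=> y; rewrite mulmxKV.
have finj : injective (fun y : vec4 => y *m A) by apply: can_inj (mulmxK HA).
have E3 : [:: a; b; c] = [seq y *m A | y <- [:: a *m invmx A; b *m invmx A; c *m invmx A]].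
  by rewrite /= !fg.
have Hu' : uniq (sums [:: a *m invmx A; b *m invmx A; c *m invmx A]).
  by move: Hu; rewrite E3 sums_mul => /map_uniq.
have := HQ _ _ _ Hu' (x *m invmx A).
rewrite E3 !sums_mul filter_map.
rewrite (eq_filter (a2 := fun y => y \in Q)); last first.
  by move=> y /=; rewrite (mem_imset _ _ finj).
rewrite sums_mul => H; rewrite -(fg x) !(mem_map finj).  exact: H.
Qed.

Lemma card_Q : #|Qplus_std| = 9%N.
Proof.
have E : Qplus_std =i map dec (filter mQ allb4).
  by move=> x; rewrite mem_map_dec mem_filter mem_allb4 andbT -dec_Q decK.
rewrite (eq_card E).
have /card_uniqP -> : uniq (map dec (filter mQ allb4)).
  by rewrite (map_inj_uniq dec_inj) filter_uniq.
by rewrite size_map; vm_compute.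
Qed.

Lemma QW_spec l : QW l -> exists a b c d, fullOK (m_of l) a b c d.
Proof.
rewrite /QW hasfE => /hasP [a _]; rewrite hasfE => /hasP [c _].
case: ifP => // _; rewrite hasfE => /hasP [d _].
case: ifP => // _; case: ifP => // _; rewrite hasfE => /hasP [b _].
case: ifP => // _; case: ifP => // _; case: ifP => // _ H.
by exists a, b, c, d.
Qed.

Lemma fullOK_spec m a b c d : fullOK m a b c d ->
  (forall p, combo a b c d p = zero4 -> p = zero4) /\
  (forall p, m (combo a b c d p) = mQ p).
Proof.
rewrite /fullOK; case: ifP => //; rewrite !allfE => /allP H1 /allP H2; split.
  by move=> p Hp; have := H1 p (mem_allb4 p); rewrite Hp eqxx => /eqP.
by move=> p; apply/eqP; apply: H2; apply: mem_allb4.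
Qed.

Definition mxA (a b c d : b4) : 'M['F_2]_4 :=
  \matrix_(i < 4) nth 0 [:: dec a; dec b; dec c; dec d] i.

Lemma combo_mul a b c d p : dec p *m mxA a b c d = dec (combo a b c d p).
Proof.
case: p => [[[p0 p1] p2] p3].
rewrite mulmx_sum_row !big_ord_recr big_ord0 /= add0r !rowK !mxE /= !dec_xor.
case: p0; case: p1; case: p2; case: p3; by rewrite /= ?dec0 ?scale0r ?scale1r ?addr0 ?add0r ?addrA.
Qed.

Lemma entry_okE a b c u v comp : entry_ok ((a,b,c),(u,v),comp) =
  uniq (sumsb [:: a; b; c]) &&
  all (fun y => (y \in [:: zero4; u; v; xor4 u v]) || (y \in comp)) (sumsb [:: a; b; c]).
Proof. by []. Qed.

Lemma entry_has (S : {set vec4}) e : S \subset PGpoints -> strong_blocking S ->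
  entry_ok e -> has (mS S) e.2.
Proof.
case: e => [[[[a b] c] [u v]] comp] HS HSB; rewrite entry_okE => /andP [Hu Hall].
apply/negPn/negP => Hn.
have E3 : [:: dec a; dec b; dec c] = map dec [:: a; b; c] by [].
set U := <<[:: dec a; dec b; dec c]>>%VS.
have HU : is_plane U.
  by apply/eqP; rewrite dim3_uniq E3 -map_dec_sumsb (map_inj_uniq dec_inj).
have E := HSB U HU.
have Hsub : (<<enum (plane_points U :&: S)%SET>> <= <<[:: dec u; dec v]>>)%VS.
  apply/span_subvP => x; rewrite (plane_enum _ _ _ HS) mem_filter => /andP [HxS].
  rewrite E3 -map_dec_sumsb => /mapP [y Hy Ex]; subst x.
  have := allP Hall y Hy => /orP [|Hc]; last first.
    by case/negP: Hn; apply/hasP; exists y.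
  rewrite !inE => /or4P [] /eqP ->.
  - by rewrite dec0 mem0v.
  - by apply: memv_span; rewrite !inE eqxx.
  - by apply: memv_span; rewrite !inE eqxx orbT.
  - by rewrite dec_xor; apply: memvD; apply: memv_span; rewrite !inE eqxx ?orbT.
have := dimvS Hsub; rewrite E HU => H3.
by have := leq_trans H3 (dim_span [:: dec u; dec v]).
Qed.


Lemma mem_chooseL l : l \in chooseL (size l) (count id l).
Proof.
elim: l => [|x l IH]; first by [].
by case: x; rewrite /= mem_cat add0n map_f ?orbT.
Qed.
Lemma forward (S : {set vec4}) : S \subset PGpoints -> strong_blocking S ->
  #|S| = 9%N -> hyperbolic_quadric S.
Proof.
move=> HS HSB H9.
set l := map (mS S) allb4.
have Hm : forall p, m_of l p = mS S p.
  move=> p; rewrite /m_of /l (nth_map zero4); last by case: p => [[[[] []] []] []].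
  by congr (mS S _); case: p => [[[[] []] []] []].
have H0 : mS S zero4 = false.
  rewrite /mS dec0; apply/negbTE; apply/negP => H.
  by have := subsetP HS _ H; rewrite inE eqxx.
have Hl : l = false :: behead l by rewrite /l /= H0.
have Hcount : count id l = 9%N.
  rewrite count_map.
  have E : S =i map dec (filter (mS S) allb4).
    by move=> x; rewrite mem_map_dec mem_filter mem_allb4 andbT /mS decK.
  rewrite -H9 (eq_card E).
  have /card_uniqP -> : uniq (map dec (filter (mS S) allb4)).
    by rewrite (map_inj_uniq dec_inj) filter_uniq.
  by rewrite size_map size_filter.
have Hsize : size l = 16%N by rewrite /l size_map.
clearbody l.
have Hmem : behead l \in chooseL 15 9.
  have := mem_chooseL (behead l).
  rewrite size_behead Hsize.
  have -> : count id (behead l) = 9%N by rewrite -Hcount {2}Hl.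
  by [].
have := allP big_check _ Hmem; rewrite /check -Hl.
have Hent : allf (fun e => hasf (m_of l) e.2) entries.
  rewrite allfE; apply/allP => e He; rewrite hasfE.
  rewrite (eq_has Hm); exact: entry_has HS HSB (allP entries_ok e He).
rewrite Hent => /QW_spec [a [b [c [d /fullOK_spec [Hinj Hfull]]]]].
pose A := mxA a b c d.
have HA : A \in unitmx.
  rewrite -row_free_unit -kermx_eq0; apply/eqP/row_matrixP => i; rewrite row0.
  have Hk : row i (kermx A) *m A = 0 by rewrite -row_mul mulmx_ker row0.
  move: Hk; rewrite -[row i (kermx A)]decK combo_mul -dec0 => /dec_inj /Hinj ->.
  by [].
exists A => //.
have finj : injective (fun y : vec4 => y *m A) by apply: can_inj (mulmxK HA).
apply/setP => y.
rewrite -[y](mulmxKV HA) -[y *m invmx A]decK (mem_imset _ _ finj) combo_mul dec_Q.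
by rewrite -Hfull Hm.
Qed.



Theorem theorem2p3 (S : {set vec4}) :
  S \subset PGpoints ->
  ((strong_blocking S /\ #|S| = 9%N) <-> hyperbolic_quadric S).
Proof.
move=> HS; split.
  by move=> [HSB H9]; apply: forward.
move=> [A HA ES]; rewrite ES in HS *.
have finj : injective (fun y : vec4 => y *m A) by apply: can_inj (mulmxK HA).
split; last by rewrite card_imset // card_Q.
apply/(SB_iff HS); apply: SB_img => //; exact: SB_Q.
Qed.
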